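(* Let $q\in\mathbb{C}\setminus\{0,1\}$ with a fixed square root $q^{1/2}$, and let $r\in\mathbb{C}$. For all integers $m,n\ge 0$, $$D_{q,x}\,H_{m,n}(x,y;q,r)=\frac{2q^{-\frac{m-1}{2}}(1-q^m)}{1-q}\,H_{m-1,n}(x,y;q,q^{1/2}r),\qquad D_{q,y}\,H_{m,n}(x,y;q,r)=\frac{2q^{-\frac{n-1}{2}}(1-q^n)}{1-q}\,H_{m,n-1}(x,y;q,q^{1/2}r),$$ with the convention $H_{-1,n}=H_{m,-1}=0$.
   Context: The continuous $q$-Hermite polynomials $H_n(x;q)\in\mathbb{C}[x]$ are defined by $H_{-1}=0$, $H_0=1$, $H_{n+1}(x;q)=2xH_n(x;q)-(1-q^n)H_{n-1}(x;q)$. The bivariate continuous $q$-Hermite polynomials $H_{m,n}(x,y;q,r)\in\mathbb{C}[x,y]$ are defined by $H_{-1,n}=H_{m,-1}=0$, $H_{0,n}(x,y;q,r)=H_n(y;q)$ and, for $m,n\ge 0$, $H_{m+1,n}=2xH_{m,n}-(1-q^m)H_{m-1,n}-q^m(1-q^n)rH_{m,n-1}$ (all evaluated at $(x,y;q,r)$). The Askey–Wilson type operator $D_q$ on polynomials $f(x)$ is defined by writing $x=\tfrac12(z+z^{-1})$ and setting $$D_qf(x)=\frac{f\big(\tfrac12(q^{1/2}z+q^{-1/2}z^{-1})\big)-f\big(\tfrac12(q^{-1/2}z+q^{1/2}z^{-1})\big)}{\tfrac12(q^{1/2}-q^{-1/2})(z-z^{-1})},$$ which is again a polynomial in $x$;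 $D_{q,x}$ and $D_{q,y}$ denote this operator acting in the variable $x$, resp. $y$, of a bivariate polynomial. *)

(* Defs.v *)
From HB Require Import structures.
From mathcomp Require Import all_boot all_order all_algebra.
From mathcomp Require Export complex.
Set Implicit Arguments. Unset Strict Implicit. Unset Printing Implicit Defensive.
Import Order.TTheory GRing.Theory Num.Theory.
Local Open Scope ring_scope.

Fixpoint Hq (F : fieldType) (q x : F) (n : nat) : F :=
  match n with
  | 0 => 1
  | n'.+1 =>
      match n' with
      | 0 => 2 * x
      | n''.+1 => 2 * x * Hq q x n' - (1 - q ^+ n') * Hq q x n''
      end
  end.

Fixpoint Hb (F : fieldType) (x y q r : F) (m n : nat) : F :=
  match m with
  | 0 => Hq q y n
  | m'.+1 =>
      2 * x * Hb x y q r m' n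
      - (1 - q ^+ m') * (match m' with 0 => 0 | m''.+1 => Hb x y q r m'' n end)
      - q ^+ m' * (1 - q ^+ n) * r * (match n with 0 => 0 | n'.+1 => Hb x y q r m' n' end)
  end.

Definition Hb_mpred (F : fieldType) (x y q r : F) (m n : nat) : F :=
  match m with 0 => 0 | m'.+1 => Hb x y q r m' n end.

Definition Hb_npred (F : fieldType) (x y q r : F) (m n : nat) : F :=
  match n with 0 => 0 | n'.+1 => Hb x y q r m n' end.

Definition jk (F : fieldType) (z : F) : F := (z + z^-1) / 2.

(* Askey-Wilson type operator D_q applied to f, at the point x = (z + z^{-1})/2,
   where s = q^{1/2} is the fixed square root of q. *)
Definition Dq (F : fieldType) (s : F) (f : F -> F) (z : F) : F :=
  (f ((s * z + s^-1 * z^-1) / 2) - f ((s^-1 * z + s * z^-1) / 2))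
  / ((s - s^-1) * (z - z^-1) / 2).

(* Main.v *)
Require Import Defs.
From HB Require Import structures.
From mathcomp Require Import all_boot all_order all_algebra.
From mathcomp Require Import complex.
From mathcomp Require Import ring zify.
Import Order.TTheory GRing.Theory Num.Theory.
Local Open Scope ring_scope.

Section QB.
Variable F : fieldType.
Variable q : F.

Fixpoint qbin (m k : nat) : F :=
  match m, k with
  | _, 0 => 1
  | 0, _.+1 => 0
  | m'.+1, k'.+1 => qbin m' k'.+1 + q ^+ (m' - k') * qbin m' k'
  end.

Lemma qbin0 m : qbin m 0 = 1. Proof. by case: m. Qed.
Lemma qbinSS m k : qbin m.+1 k.+1 = qbin m k.+1 + q ^+ (m - k) * qbin m k.
Proof. by []. Qed.
Lemma qbin_gt m k : (m < k)%N -> qbin m k = 0.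
Proof.
elim: m k => [|m IH] [|k] //= H.
by rewrite !IH ?mulr0 ?addr0 //; lia.
Qed.

Lemma qbinE m k : (1 - q ^+ k.+1) * qbin m k.+1 = (1 - q ^+ (m - k)) * qbin m k.
Proof.
elim: m k => [|m IH] k.
  by rewrite sub0n expr0 subrr mul0r /=; rewrite mulr0.
case: k => [|k].
  rewrite qbinSS !qbin0 subn0 mulr1 mulrDr.
  have := IH 0%N; rewrite subn0 qbin0 mulr1 => ->.
  rewrite !exprS expr0; ring.
case: (leqP m k) => Hmk.
  have h1 : qbin m k.+2 = 0 by apply: qbin_gt; lia.
  have h2 : qbin m k.+1 = 0 by apply: qbin_gt; lia.
  rewrite !qbinSS h1 h2.
  rewrite subSS (_ : (m - k = 0)%N); last lia.
  by rewrite expr0 subrr !mul0r mulr0 add0r mulr0.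
have [d Hd] : exists d, m = (d + k.+1)%N by exists (m - k.+1)%N; lia.
subst m.
rewrite !qbinSS subSS.
have E1 := IH k.+1; have E2 := IH k.
rewrite (_ : (d + k.+1 - k.+1 = d)%N) in E1 *; last lia.
rewrite (_ : (d + k.+1 - k = d.+1)%N) in E2 *; last lia.
set B := qbin (d + k.+1) k.+1 in E1 E2 *.
set C := qbin (d + k.+1) k in E1 E2 *.
set A := qbin (d + k.+1) k.+2 in E1 E2 *.
rewrite mulrDr E1 mulrDr [X in _ = _ + X]mulrCA -E2.
rewrite !exprS; ring.
Qed.


Lemma qbinA1 n k : (1 - q ^+ n.+1) * qbin n k = (1 - q ^+ k.+1) * qbin n.+1 k.+1.
Proof.
case: (ltnP n k) => Hnk.
  have h1 : qbin n k = 0 by apply: qbin_gt.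
  have h2 : qbin n.+1 k.+1 = 0 by apply: qbin_gt.
  by rewrite h1 h2 !mulr0.
have [d Hd] : exists d, n = (d + k)%N by exists (n - k)%N; lia.
subst n.
rewrite qbinSS mulrDr qbinE (_ : (d + k - k = d)%N); last lia.
rewrite !(exprS, exprD); ring.
Qed.

Lemma qbinA2 m k : (1 - q ^+ (m.+1 - k)) * qbin m.+1 k = (1 - q ^+ m.+1) * qbin m k.
Proof.
case: k => [|k]; first by rewrite !qbin0 subn0.
rewrite subSS.
case: (ltnP k m) => Hkm; last first.
  have h2 : qbin m k.+1 = 0 by apply: qbin_gt.
  rewrite h2 mulr0 (_ : (m - k = 0)%N); last lia.
  by rewrite expr0 subrr mul0r.
have [d Hd] : exists d, m = (d + k.+1)%N by exists (m - k.+1)%N; lia.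
subst m.
have E2 := qbinE (d + k.+1) k.
rewrite (_ : (d + k.+1 - k = d.+1)%N) in E2 *; last lia.
rewrite qbinSS (_ : (d + k.+1 - k = d.+1)%N); last lia.
rewrite mulrDr mulrCA -E2.
rewrite !(exprS, exprD); ring.
Qed.


Lemma lincomb (a b c d k : F) : c = d -> a - b = k * (c - d) -> a = b.
Proof. by move=> -> /eqP; rewrite subrr mulr0 subr_eq0 => /eqP. Qed.

Fixpoint qpoch k := match k with 0 => 1 | k'.+1 => (1 - q ^+ k'.+1) * qpoch k' end.
Fixpoint tt (r : F) k := match k with 0 => 1 | k'.+1 => - (r * q ^+ k') * tt r k' end.
Definition cc r m n k := qbin m k * qbin n k * qpoch k * tt r k.

Lemma cc0 r m n : cc r m n 0 = 1.
Proof. by rewrite /cc !qbin0 /= !mulr1. Qed.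

Lemma cc_gt r m n k : (m < k)%N -> cc r m n k = 0.
Proof. by move=> H; rewrite /cc qbin_gt // !mul0r. Qed.

Lemma cc_sym r m n k : cc r m n k = cc r n m k.
Proof. by rewrite /cc (mulrC (qbin m k)). Qed.

Lemma tt_scale s r k : tt (s * r) k = s ^+ k * tt r k.
Proof.
elim: k => [|k IH] /=; first by rewrite mulr1.
rewrite IH exprS; ring.
Qed.

Lemma cc_scale s r m n k : cc (s * r) m n k = s ^+ k * cc r m n k.
Proof. rewrite /cc tt_scale; ring. Qed.

Lemma ccI2 r m n k :
  (1 - q ^+ (m.+1 - k)) * cc r m.+1 n k = (1 - q ^+ m.+1) * cc r m n k.
Proof. by rewrite /cc !mulrA qbinA2. Qed.

Lemma ccI1 r m n k :
  cc r m.+1 n k.+1 = cc r m n k.+1 - q ^+ m * (1 - q ^+ n) * r * cc r m n.-1 k.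
Proof.
case: n => [|n].
  by rewrite /cc /= expr0 subrr !(mulr0, mul0r, subr0).
case: (ltnP m k) => Hmk.
  have h : qbin m k = 0 by apply: qbin_gt.
  rewrite /cc qbinSS h.
  rewrite mulr0 addr0 !mul0r !mulr0 subr0 //.
have [d Hd] : exists d, m = (d + k)%N by exists (m - k)%N; lia.
subst m.
rewrite /cc qbinSS /= (_ : (d + k - k = d)%N); last lia.
apply: (@lincomb _ _ _ _ (r * q ^+ d * q ^+ k * qbin (d + k) k * qpoch k * tt r k) (qbinA1 n k)).
rewrite -qbinSS. rewrite !(exprS, exprD); ring.
Qed.

Lemma HqS x j : 2 * x * Hq q x j = Hq q x j.+1 + (1 - q ^+ j) * Hq q x j.-1.
Proof.
case: j => [|j] /=; first by rewrite expr0 subrr mul0r addr0 mulr1.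
by rewrite subrK.
Qed.

Definition S x y r m n :=
  \sum_(k < m.+1) cc r m n k * Hq q x (m - k) * Hq q y (n - k).

Lemma SR x y r m n :
  S x y r m.+1 n = 2 * x * S x y r m n - (1 - q ^+ m) * S x y r m.-1 n
     - q ^+ m * (1 - q ^+ n) * r * S x y r m n.-1.
Proof.
have P2 : \sum_(k < m.+1) cc r m n k * ((1 - q ^+ (m - k)) * Hq q x (m - k).-1)
           * Hq q y (n - k) = (1 - q ^+ m) * S x y r m.-1 n.
  case: m => [|m].
    by rewrite big_ord1 /= sub0n expr0 subrr !(mul0r, mulr0).
  rewrite /S mulr_sumr big_ord_recr /= subnn expr0 subrr !(mul0r, mulr0) addr0.
  apply: eq_bigr => i _.
  rewrite (mulrC (1 - _)) mulrA -(mulrA (cc _ _ _ _)) (mulrC (Hq _ _ _)) mulrA.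
  rewrite (mulrC (cc _ _ _ _)) ccI2 (_ : ((m.+1 - i).-1 = m - i)%N); last by case: i => /= i Hi; lia.
  by rewrite !mulrA.
have P1 : S x y r m.+1 n = \sum_(k < m.+1) cc r m n k * Hq q x (m - k).+1 * Hq q y (n - k)
     - q ^+ m * (1 - q ^+ n) * r * S x y r m n.-1.
  rewrite /S big_ord_recl.
  under eq_bigr => i _ do rewrite lift0 ccI1 subSS mulrBl mulrBl.
  rewrite big_split sumrN addrA.
  congr (_ - _); last first.
    rewrite mulr_sumr; apply: eq_bigr => i _.
    rewrite !mulrA (_ : (n - i.+1 = n.-1 - i)%N) //; lia.
  transitivity (\sum_(k < m.+2) cc r m n k * Hq q x (m.+1 - k) * Hq q y (n - k)).
    rewrite [in RHS]big_ord_recl !cc0; congr (_ + _).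

  rewrite big_ord_recr /= cc_gt // !mul0r addr0.
  apply: eq_bigr => i _.
  by rewrite subSn // -ltnS ltn_ord.
rewrite P1 -P2; congr (_ - _).
apply/eqP; rewrite eq_sym subr_eq; apply/eqP.
rewrite /S mulr_sumr -big_split; apply: eq_bigr => i _.
have H := HqS x (m - i).
set X1 := Hq q x (m - i).+1 in H *.
set X2 := Hq q x (m - i).-1 in H *.
apply: (@lincomb _ _ _ _ (cc r m n i * Hq q y (n - i)) H).
rewrite /=; ring.
Qed.



Lemma HbSucc x y r m n : Hb x y q r m.+1 n = 2 * x * Hb x y q r m n
  - (1 - q ^+ m) * Hb_mpred x y q r m n - q ^+ m * (1 - q ^+ n) * r * Hb_npred x y q r m n.
Proof. by []. Qed.

Lemma HbS x y r m n : Hb x y q r m n = S x y r m n.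
Proof.
elim/ltn_ind: m n => m IH n.
case: m IH => [|m] IH.
  by rewrite /S big_ord1 cc0 !subn0 /= !mul1r.
rewrite HbSucc SR IH //.
congr (_ - _ - _).
  case: m IH => [|m] IH; first by rewrite expr0 subrr !mul0r.
  by rewrite /Hb_mpred IH.
case: n => [|n]; first by rewrite expr0 subrr !(mulr0, mul0r).
by rewrite /Hb_npred IH.
Qed.


Lemma sum_widen (f : nat -> F) m N : (forall k, (m < k)%N -> f k = 0) -> (m <= N)%N ->
  \sum_(k < m.+1) f k = \sum_(k < N.+1) f k.
Proof.
move=> Hf HN; rewrite (big_ord_widen N.+1 f) ?ltnS // big_mkcond.
apply: eq_bigr => i _; case: ltnP => // H; by rewrite Hf.
Qed.

Lemma HbC x y r m n : Hb x y q r m n = Hb y x q r n m.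
Proof.
rewrite !HbS /S.
rewrite (@sum_widen (fun k => cc r m n k * Hq q x (m - k) * Hq q y (n - k)) m (m + n)); last by rewrite leq_addr.
  rewrite (@sum_widen (fun k => cc r n m k * Hq q y (n - k) * Hq q x (m - k)) n (m + n)); last by rewrite leq_addl.
    by apply: eq_bigr => i _; rewrite cc_sym mulrAC.
  by move=> k Hk; rewrite cc_gt // !mul0r.
by move=> k Hk; rewrite cc_gt // !mul0r.
Qed.


Section SV.
Variable s : F.
Hypothesis hs : s ^+ 2 = q.
Hypothesis hs0 : s != 0.
Hypothesis h2 : (2 : F) != 0.

Definition h j (z : F) := Hq q (jk z) j.

Lemma qpow j : q ^+ j = s ^+ j * s ^+ j.
Proof. by rewrite -hs -exprM mul2n -addnn exprD. Qed.

Lemma h1 (z : F) : 2 * jk z = z + z^-1.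
Proof. by rewrite /jk mulrC divfK. Qed.

Lemma hSS j (z : F) : h j.+2 z = (z + z^-1) * h j.+1 z - (1 - q ^+ j.+1) * h j z.
Proof. by rewrite /h -h1. Qed.

Lemma hR j : forall z : F, z != 0 ->
  h j.+1 z = z * s ^+ j * h j (z / s) + z^-1 * h j z /\ h j.+1 z = z^-1 * s ^+ j * h j (s * z) + z * h j z.
Proof.
elim: j => [|j IH] z hz.
  rewrite /h /= mulr1 h1 !expr0 !mulr1; split; ring.
have [R1z R2z] := IH z hz.
have hzs : z / s != 0 by rewrite mulf_neq0 ?invr_eq0.
have hsz : s * z != 0 by rewrite mulf_neq0.
have [_ R2zs] := IH _ hzs.
have [R1sz _] := IH _ hsz.
have e1 : s * (z / s) = z by rewrite mulrCA divff // mulr1.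
have e2 : s * z / s = z by rewrite [s * z]mulrC mulfK.
rewrite e1 in R2zs; rewrite e2 in R1sz.
split.
  rewrite hSS R2zs R1z.
  rewrite qpow !exprS; field; rewrite ?hz ?hs0 //.
rewrite hSS R1sz R2z.
rewrite qpow !exprS; field; rewrite ?hz ?hs0 //.
Qed.


Lemma hD j (z : F) : z != 0 ->
  h j (s * z) - h j (z / s) = (s ^+ j - s ^- j) * (z - z^-1) * h j.-1 z.
Proof.
move=> hz; case: j => [|j].
  by rewrite /h /= expr0 invr1 !subrr !mul0r.
have [R1z R2z] := hR j z hz.
have hzs : z / s != 0 by rewrite mulf_neq0 ?invr_eq0.
have hsz : s * z != 0 by rewrite mulf_neq0.
have [_ R2zs] := hR j _ hzs.
have [R1sz _] := hR j _ hsz.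
have e1 : s * (z / s) = z by rewrite mulrCA divff // mulr1.
have e2 : s * z / s = z by rewrite [s * z]mulrC mulfK.
rewrite e1 in R2zs; rewrite e2 in R1sz.
rewrite R1sz R2zs /=.
have E : z * s ^+ j * h j (z / s) + z^-1 * h j z = z^-1 * s ^+ j * h j (s * z) + z * h j z
  by rewrite -R1z -R2z.
apply: (@lincomb _ _ _ _ (- (s ^+ j.+1)^-1) E).
rewrite !exprS; field.
by rewrite hz hs0 expf_neq0.
Qed.


Lemma coef_id (d i : nat) (C1 C0 : F) :
  (1 - q ^+ d.+1) * C1 = (1 - q ^+ (d.+1 + i)) * C0 ->
  C1 * (s ^+ d.+1 - s ^- d.+1) = (s ^+ (d.+1 + i) - s ^- (d.+1 + i)) * (s ^+ i * C0).
Proof.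
move=> E.
apply: (@lincomb _ _ _ _ (- s ^- d.+1) E).
rewrite !qpow !exprD; field.
by rewrite !expf_neq0.
Qed.

Lemma HbDx y r m n (z : F) : z != 0 ->
  Hb (jk (s * z)) y q r m n - Hb (jk (z / s)) y q r m n =
  (s ^+ m - s ^- m) * (z - z^-1) * Hb_mpred (jk z) y q (s * r) m n.
Proof.
move=> hz; rewrite !HbS /S -sumrB.
case: m => [|m].
  by rewrite big_ord1 /= subrr mulr0.
rewrite /Hb_mpred HbS /S mulr_sumr big_ord_recr /= subnn /= subrr addr0.
apply: eq_bigr => i _.
have Hi : (i <= m)%N by rewrite -ltnS ltn_ord.
have [d Hd] : exists d, m = (d + i)%N by exists (m - i)%N; lia.
rewrite -mulrBl -mulrBr.
have := hD (m.+1 - i) z hz; rewrite /h => ->.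
rewrite (_ : (m.+1 - i = d.+1)%N); last lia.
rewrite (_ : (m - i = d)%N); last lia.
rewrite /= cc_scale.
have E := ccI2 r m n i.
rewrite (_ : (m.+1 - i = d.+1)%N) in E; last lia.
have -> : s ^+ m.+1 = s ^+ (d.+1 + i) by rewrite addSn -Hd.
rewrite (_ : q ^+ m.+1 = q ^+ (d.+1 + i)) in E; last by rewrite addSn -Hd.
have C := @coef_id _ _ _ _ E.
apply: (@lincomb _ _ _ _ ((z - z^-1) * Hq q (jk z) d * Hq q y (n - i)) C).
ring.
Qed.

End SV.

End QB.

Lemma Dq_ext (F : fieldType) (s : F) (f g : F -> F) z :
  (forall t, f t = g t) -> Dq s f z = Dq s g z.
Proof. by move=> H; rewrite /Dq !H. Qed.

Lemma xpart (R : rcfType) (q s r : R[i])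
    (hq0 : q != 0) (hq1 : q != 1) (hs : s ^+ 2 = q) (m n : nat) (y z : R[i]) :
  z != 0 -> z ^+ 2 != 1 ->
     Dq s (fun x => Hb x y q r m n) z
     = 2 * s ^ (1 - m%:Z) * (1 - q ^+ m) / (1 - q)
       * Hb_mpred (jk z) y q (s * r) m n.
Proof.
move=> hz hz2.
have hs0 : s != 0 by apply: contraNneq hq0 => s0; rewrite -hs s0 expr2 mul0r.
have h2 : (2 : R[i]) != 0 by rewrite pnatr_eq0.
have e1 : (s * z + s^-1 * z^-1) / 2 = jk (s * z) by rewrite /jk invfM.
have e2 : (s^-1 * z + s * z^-1) / 2 = jk (z / s) by rewrite /jk invfM invrK; ring.
have hw : z - z^-1 != 0.
  apply: contraNneq hz2; move/eqP; rewrite subr_eq0 => /eqP H.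
  by rewrite expr2 {1}H mulVf.
have hsw : s - s^-1 != 0.
  apply: contraNneq hq1; move/eqP; rewrite subr_eq0 => /eqP H.
  by rewrite -hs expr2 {1}H mulVf.
have h1q : 1 - q != 0 by rewrite subr_eq0 eq_sym.
rewrite /Dq e1 e2 (@HbDx _ q s hs hs0 h2 y r m n z hz).
case: m => [|m]; first by rewrite /Hb_mpred !mulr0 mul0r.
have -> : (1 - (m.+1)%:Z = - (m%:Z))%R by lia.
rewrite -exprnN.
set P := Hb_mpred _ _ _ _ _ _.
rewrite (@qpow _ q s hs) -hs expr2 !exprS.
field.
have hss : s * s - 1 != 0 by rewrite subr_eq0 -expr2 hs.
rewrite hz hs0 hss expf_neq0 //= andbT.
apply/andP; split; first by rewrite -expr2 hs.
by rewrite subr_eq0 -expr2.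
Qed.

Theorem proposition3p5 (R : rcfType) (q s r : R[i])
    (hq0 : q != 0) (hq1 : q != 1) (hs : s ^+ 2 = q) (m n : nat) :
  (forall (y z : R[i]), z != 0 -> z ^+ 2 != 1 ->
     Dq s (fun x => Hb x y q r m n) z
     = 2 * s ^ (1 - m%:Z) * (1 - q ^+ m) / (1 - q)
       * Hb_mpred (jk z) y q (s * r) m n)
  /\
  (forall (x z : R[i]), z != 0 -> z ^+ 2 != 1 ->
     Dq s (fun y => Hb x y q r m n) z
     = 2 * s ^ (1 - n%:Z) * (1 - q ^+ n) / (1 - q)
       * Hb_npred x (jk z) q (s * r) m n).
Proof.
split => [y z hz hz2 | x z hz hz2]; first exact: xpart.
rewrite (@Dq_ext _ s _ (fun t => Hb t x q r n m)); last by move=> t; rewrite HbC.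
rewrite (@xpart R q s r hq0 hq1 hs n m x z hz hz2).
congr (_ * _).
by case: n => [|n] //=; rewrite HbC.
Qed.
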